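(* Let $(\mathfrak{A},\mathfrak{A}_0)$ be a CQ*-algebra as described in the context, and let $\omega$ be a $\|\cdot\|$-continuous positive linear functional on $\mathfrak{A}_0$ with GNS construction $(\pi_\omega,\lambda_\omega,\mathcal{H}_\omega)$. Then there exist a map $\pi_{\overline{\omega}}$ and a linear map $\lambda_{\overline{\omega}}$ such that: (1) $\pi_{\overline{\omega}}$ is a $*$-representation of the quasi *-algebra $(\mathfrak{A},\mathfrak{A}_0)$ into $\mathcal{L}^\dagger(\lambda_\omega(\mathfrak{A}_0), v(\lambda_\omega(\mathfrak{A}_0)))$ (in the Hilbert space $\mathcal{H}_{\overline{\omega}}:=\mathcal{H}_\omega$, with domain $\mathcal{D}(\pi_{\overline{\omega}})=\lambda_\omega(\mathfrak{A}_0)$), which extends $\pi_\omega$; (2) $\lambda_{\overline{\omega}}$ is a linear map from $\mathfrak{A}$ into $v(\lambda_\omega(\mathfrak{A}_0))$ which extends $\lambda_\omega$ and satisfies $\lambda_{\overline{\omega}}(XB)=\pi_{\overline{\omega}}(X)\lambda_\omega(B)$ for all $X\in\mathfrak{A}$ and $B\in\mathfrak{A}_0$.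
   Context: Let $\mathfrak{A}_0$ be a unital C*-algebra with C*-norm $\|\cdot\|_0$ and unit $I$, and let $\|\cdot\|$ be another norm on $\mathfrak{A}_0$ such that $\|A\|\le\|A\|_0$, $\|AB\|\le\|A\|\,\|B\|_0$ and $\|A^*\|=\|A\|$ for all $A,B\in\mathfrak{A}_0$. Let $\mathfrak{A}$ be the completion of $(\mathfrak{A}_0,\|\cdot\|)$, with extended norm still denoted $\|\cdot\|$. For $X\in\mathfrak{A}$, $A\in\mathfrak{A}_0$ and any sequence $A_n\in\mathfrak{A}_0$ with $\|A_n-X\|\to0$, define $XA:=\lim A_nA$, $AX:=\lim AA_n$, $X^*:=\lim A_n^*$ (limits in $\|\cdot\|$); these are well defined and make $(\mathfrak{A},\mathfrak{A}_0)$ a quasi *-algebra (i.e. $\mathfrak{A}$ is an $\mathfrak{A}_0$-bimodule with involution extending that of $\mathfrak{A}_0$, $(XA)^*=A^*X^*$, and $(AX)B=A(XB)$ etc.), called a CQ*-algebra. A linear functional $\omega$ on $\mathfrak{A}_0$ is a $\|\cdot\|$-continuous positive linear functional if $\omega(A^*A)\ge0$ for all $A$ and there is $\gamma>0$ with $|\omega(A)|\le\gamma\|A\|$ for all $A\in\mathfrak{A}_0$. $(\pi_\omega,\lambda_\omega,\mathcal{H}_\omega)$ denotes the usual GNS construction of $\omega$ on the C*-algebra $\mathfrak{A}_0$: $\lambda_\omega:\mathfrak{A}_0\to\mathcal{H}_\omega$ is linear with dense range, $(\lambda_\omega(A)|\lambda_\omega(B))=\omega(B^*A)$, and $\pi_\omega(A)\lambda_\omega(B)=\lambda_\omega(AB)$.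 Unbounded vectors: for a subspace $\mathcal{D}$ of a Hilbert space $\mathcal{H}$, $v(\mathcal{D})$ is the vector space of all conjugate-linear functionals on $\mathcal{D}$ (value of $v$ at $\xi$ written $\langle v,\xi\rangle$); each $\xi\in\mathcal{H}$ is identified with $\eta\mapsto(\xi|\eta)$. $\mathcal{L}^\dagger(\mathcal{D})$ is the *-algebra of linear operators $A$ on $\mathcal{D}$ having an adjoint $A^\dagger$ that maps $\mathcal{D}$ into $\mathcal{D}$. $\mathcal{L}^\dagger(\mathcal{D},v(\mathcal{D}))$ is the set of linear maps $\mathcal{D}\to v(\mathcal{D})$; it is a quasi *-algebra over $\mathcal{L}^\dagger(\mathcal{D})$ with $\langle AX\xi,\eta\rangle=\langle X\xi,A^\dagger\eta\rangle$, $\langle XA\xi,\eta\rangle=\langle X(A\xi),\eta\rangle$, $\langle X^\dagger\xi,\eta\rangle=\overline{\langle X\eta,\xi\rangle}$. A $*$-representation of a quasi *-algebra $(\mathscr{A},\mathscr{A}_0)$ into $\mathcal{L}^\dagger(\mathcal{D},v(\mathcal{D}))$ is a linear map $\pi$ with $\pi(ax)=\pi(a)\pi(x)$, $\pi(xa)=\pi(x)\pi(a)$, $\pi(x^* )=\pi(x)^\dagger$ for all $x\in\mathscr{A}$, $a\in\mathscr{A}_0$ (with $\pi(\mathscr{A}_0)\subset\mathcal{L}^\dagger(\mathcal{D})$). *)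

(* Defs.v *)
From HB Require Import structures.
From mathcomp Require Import all_boot all_order all_algebra.
From mathcomp Require Import reals complex.
Set Implicit Arguments.
Unset Strict Implicit.
Unset Printing Implicit Defensive.
Import Order.TTheory GRing.Theory Num.Theory.
Local Open Scope ring_scope.

Section Defs.
Variable R : realType.
Local Notation C := (R[i]).

Definition seq_cvg (V : zmodType) (nrm : V -> R) (u : nat -> V) (x : V) :=
  forall e : R, 0 < e -> exists N, forall k, (N <= k)%N -> nrm (u k - x) < e.

Definition seq_cauchy (V : zmodType) (nrm : V -> R) (u : nat -> V) :=
  forall e : R, 0 < e -> exists N, forall k l, (N <= k)%N -> (N <= l)%N ->
    nrm (u k - u l) < e.

Definition is_complete (V : zmodType) (nrm : V -> R) :=
  forall u : nat -> V, seq_cauchy nrm u -> exists x, seq_cvg nrm u x.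

Definition is_norm (V : lmodType C) (nrm : V -> R) :=
  [/\ forall x, 0 <= nrm x,
      forall x, nrm x = 0 -> x = 0,
      forall (c : C) x, nrm (c *: x) = ComplexField.Normc.normc c * nrm x &
      forall x y, nrm (x + y) <= nrm x + nrm y].

(** * Unital C*-algebra (A0, mul, I, star, n0)  (I = 0 is not excluded) *)
Definition is_unital_Cstar_algebra (A0 : lmodType C) (mul : A0 -> A0 -> A0)
    (I : A0) (star : A0 -> A0) (n0 : A0 -> R) :=
  [/\ (forall a b d, mul (mul a b) d = mul a (mul b d)),
      (forall (c : C) a b d, mul (c *: a + b) d = c *: mul a d + mul b d),
      (forall (c : C) a b d, mul d (c *: a + b) = c *: mul d a + mul d b) &
      (forall a, mul I a = a /\ mul a I = a)] /\
  [/\ (forall (c : C) a b, star (c *: a + b) = conjc c *: star a + star b),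
      (forall a, star (star a) = a) &
      (forall a b, star (mul a b) = mul (star b) (star a))] /\
  [/\ is_norm n0,
      forall a b, n0 (mul a b) <= n0 a * n0 b,
      forall a, n0 (mul (star a) a) = n0 a ^+ 2 &
      is_complete n0].

Definition is_CQ_norm (A0 : lmodType C) (mul : A0 -> A0 -> A0)
    (star : A0 -> A0) (n0 n : A0 -> R) :=
  [/\ is_norm n,
      forall a, n a <= n0 a,
      forall a b, n (mul a b) <= n a * n0 b &
      forall a, n (star a) = n a].

Definition is_completion (A0 : lmodType C) (n : A0 -> R)
    (A : lmodType C) (nA : A -> R) (j : A0 -> A) :=
  [/\ forall (c : C) a b, j (c *: a + b) = c *: j a + j b,
      is_norm nA,
      forall a, nA (j a) = n a,
      is_complete nA &
      forall X : A, exists u : nat -> A0, seq_cvg nA (fun k => j (u k)) X].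

(** the bimodule operations and involution of A, defined by
    XA := lim A_n A, AX := lim A A_n, X^* := lim A_n^* *)
Definition CQ_operations (A0 : lmodType C) (mul : A0 -> A0 -> A0)
    (star : A0 -> A0) (A : lmodType C) (nA : A -> R) (j : A0 -> A)
    (mulAr : A -> A0 -> A) (mulAl : A0 -> A -> A) (starA : A -> A) :=
  forall (X : A) (u : nat -> A0), seq_cvg nA (fun k => j (u k)) X ->
    [/\ forall a, seq_cvg nA (fun k => j (mul (u k) a)) (mulAr X a),
        forall a, seq_cvg nA (fun k => j (mul a (u k))) (mulAl a X) &
        seq_cvg nA (fun k => j (star (u k))) (starA X)].

Definition cont_positive_functional (A0 : lmodType C) (mul : A0 -> A0 -> A0)
    (star : A0 -> A0) (n : A0 -> R) (omega : A0 -> C) :=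
  [/\ forall (c : C) a b, omega (c *: a + b) = c * omega a + omega b,
      forall a, 0 <= omega (mul (star a) a) &
      exists gamma : R, 0 < gamma /\ forall a, ComplexField.Normc.normc (omega a) <= gamma * n a].

(** Hilbert space (H, ip), inner product linear in the first variable *)
Definition hnorm (H : lmodType C) (ip : H -> H -> C) (x : H) : R :=
  Num.sqrt (complex.Re (ip x x)).

Definition is_Hilbert (H : lmodType C) (ip : H -> H -> C) :=
  [/\ forall (c : C) x y z, ip (c *: x + y) z = c * ip x z + ip y z,
      forall x y, ip x y = conjc (ip y x),
      forall x, 0 <= ip x x,
      forall x, ip x x = 0 -> x = 0 &
      is_complete (hnorm ip)].

Definition is_GNS (A0 : lmodType C) (mul : A0 -> A0 -> A0) (star : A0 -> A0)
    (omega : A0 -> C) (H : lmodType C) (ip : H -> H -> C)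
    (lam : A0 -> H) (pi : A0 -> H -> H) :=
  [/\ is_Hilbert ip,
      forall (c : C) a b, lam (c *: a + b) = c *: lam a + lam b,
      forall (x : H) (e : R), 0 < e -> exists a, hnorm ip (x - lam a) < e,
      forall a b, ip (lam a) (lam b) = omega (mul (star b) a) &
      forall a, [/\ forall (c : C) x y, pi a (c *: x + y) = c *: pi a x + pi a y,
                    exists M : R, forall x, hnorm ip (pi a x) <= M * hnorm ip x &
                    forall b, pi a (lam b) = lam (mul a b)]].

(** * Unbounded vectors on D = lam(A0).
   An element of v(D) is represented by a function H -> C, only its values
   on D being relevant; a vector xi of H is identified with (xi | .).
   An element of L(D, v(D)) is represented by X : H -> H -> C,
   <X xi, eta> := X xi eta (xi, eta in D). *)
Definition inD (A0 : lmodType C) (H : lmodType C) (lam : A0 -> H) (x : H) :=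
  exists b, x = lam b.

Definition in_vD (A0 H : lmodType C) (lam : A0 -> H) (f : H -> C) :=
  forall (c : C) x y, inD lam x -> inD lam y ->
    f (c *: x + y) = conjc c * f x + f y.

Definition in_LDvD (A0 H : lmodType C) (lam : A0 -> H) (X : H -> H -> C) :=
  (forall xi, inD lam xi -> in_vD lam (X xi)) /\
  (forall (c : C) xi eta zeta, inD lam xi -> inD lam eta -> inD lam zeta ->
     X (c *: xi + eta) zeta = c * X xi zeta + X eta zeta).

(** T (restricted to D) is in L^dagger(D), with adjoint Td (restricted to D) *)
Definition in_Ldag (A0 H : lmodType C) (ip : H -> H -> C) (lam : A0 -> H)
    (T Td : H -> H) :=
  [/\ forall x, inD lam x -> inD lam (T x),
      forall x, inD lam x -> inD lam (Td x),
      forall (c : C) x y, inD lam x -> inD lam y ->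
        T (c *: x + y) = c *: T x + T y &
      forall x y, inD lam x -> inD lam y -> ip (T x) y = ip x (Td y)].

Definition is_star_rep (A0 : lmodType C) (A : lmodType C) (j : A0 -> A)
    (mulAr : A -> A0 -> A) (mulAl : A0 -> A -> A) (starA : A -> A)
    (H : lmodType C) (ip : H -> H -> C) (lam : A0 -> H)
    (pibar : A -> H -> H -> C) :=
  [/\ forall X, in_LDvD lam (pibar X),
      forall (c : C) X Y xi eta, inD lam xi -> inD lam eta ->
        pibar (c *: X + Y) xi eta = c * pibar X xi eta + pibar Y xi eta,
      forall a : A0, exists T Td : H -> H,
        [/\ in_Ldag ip lam T Td,
            forall xi eta, inD lam xi -> inD lam eta ->
              pibar (j a) xi eta = ip (T xi) eta,
            forall X xi eta, inD lam xi -> inD lam eta ->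
              pibar (mulAl a X) xi eta = pibar X xi (Td eta) &
            forall X xi eta, inD lam xi -> inD lam eta ->
              pibar (mulAr X a) xi eta = pibar X (T xi) eta] &
      forall X xi eta, inD lam xi -> inD lam eta ->
        pibar (starA X) xi eta = conjc (pibar X eta xi)].

End Defs.

(* Main.v *)
From HB Require Import structures.
From mathcomp Require Import all_boot all_order all_algebra.
From mathcomp Require Import reals complex.
Require Import Defs.
From mathcomp Require all_classical topology normedtype.
Import Order.TTheory GRing.Theory Num.Theory.
Local Open Scope ring_scope.
Set Implicit Arguments.
Unset Strict Implicit.

Module RC.
Import all_classical topology normedtype.
Import numFieldNormedType.Exports.
Local Open Scope classical_set_scope.
Lemma realcomplete (R : realType) (u : nat -> R) :
  (forall e : R, 0 < e -> exists N, forall k l, (N <= k)%N -> (N <= l)%N -> `|u k - u l| < e) ->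
  exists x, forall e : R, 0 < e -> exists N, forall k, (N <= k)%N -> `|u k - x| < e.
Proof.
move=> Hc.
have : cauchy (u @ \oo).
  apply: cauchy_exP => e e0.
  have [N HN] := Hc e e0.
  exists (u N); exists N => // k /= Hk.
  rewrite /ball /= distrC. by apply: HN.
move/cauchy_cvgP => /cvg_ex [l Hl].
exists l => e e0.
move/cvgrPdist_lt: Hl => /(_ e e0) [N _ HN].
exists N => k Hk; rewrite distrC; exact: HN.
Qed.
End RC.

Definition small (R : realType) (d : nat -> R) :=
  forall e : R, 0 < e -> exists N, forall k, (N <= k)%N -> d k < e.

Lemma small_add (R : realType) (d1 d2 : nat -> R) :
  small d1 -> small d2 -> small (fun k => d1 k + d2 k).
Proof.
move=> h1 h2 e e0.
have e2 : 0 < e / 2 by rewrite divr_gt0.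
have [N1 H1] := h1 _ e2; have [N2 H2] := h2 _ e2.
exists (maxn N1 N2) => k Hk.
rewrite [e](splitr e) ltrD //; [apply: H1|apply: H2]; apply: leq_trans Hk;
  [exact: leq_maxl|exact: leq_maxr].
Qed.

Lemma small_le (R : realType) (d d' : nat -> R) :
  (forall k, d' k <= d k) -> small d -> small d'.
Proof.
move=> hle h e e0; have [N HN] := h e e0; exists N => k Hk.
exact: le_lt_trans (hle k) (HN k Hk).
Qed.

Lemma small_scale (R : realType) (K : R) (d : nat -> R) :
  0 < K -> small d -> small (fun k => K * d k).
Proof.
move=> K0 h e e0.
have eK : 0 < e / K by rewrite divr_gt0.
have [N HN] := h _ eK; exists N => k Hk.
have := HN k Hk; rewrite ltr_pdivlMr // => H.
by rewrite mulrC.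
Qed.

Lemma small_const (R : realType) (c : R) : small (fun _ => c) -> c <= 0.
Proof.
move=> h; rewrite leNgt; apply/negP => c0.
have [N HN] := h c c0; have := HN N (leqnn N); by rewrite ltxx.
Qed.

Section Gen.
Variable R : realType.
Variables (V : zmodType) (nrm : V -> R).
Hypothesis tri : forall x y, nrm (x + y) <= nrm x + nrm y.
Hypothesis nrmN : forall x, nrm (- x) = nrm x.

Lemma dist_tri a b c : nrm (a - b) <= nrm (a - c) + nrm (b - c).
Proof.
have -> : a - b = (a - c) + - (b - c) by rewrite opprB addrA subrK.
by rewrite -(nrmN (b - c)); apply: tri.
Qed.

Lemma cvg_add (u v : nat -> V) x y : seq_cvg nrm u x -> seq_cvg nrm v y ->
  seq_cvg nrm (fun k => u k + v k) (x + y).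
Proof.
move=> hu hv; apply: (small_le _ (small_add hu hv)) => k /=.
have -> : u k + v k - (x + y) = (u k - x) + (v k - y) by rewrite opprD addrACA.
exact: tri.
Qed.

Lemma cvg_uniq (u : nat -> V) x y :
  (forall x, nrm x = 0 -> x = 0) -> (forall x, 0 <= nrm x) ->
  seq_cvg nrm u x -> seq_cvg nrm u y -> x = y.
Proof.
move=> def pos hx hy.
have h : small (fun _ => nrm (x - y)).
  apply: (small_le _ (small_add hx hy)) => k.
  rewrite -(nrmN (u k - x)) opprB -(nrmN (u k - y)) opprB; exact: dist_tri.
have : nrm (x - y) = 0 by apply/le_anti; rewrite pos small_const.
by move/def/eqP; rewrite subr_eq0 => /eqP.
Qed.

Lemma cvg_const x : nrm 0 = 0 -> seq_cvg nrm (fun _ => x) x.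
Proof. by move=> h0 e e0; exists 0%N => k _; rewrite subrr h0. Qed.

End Gen.

Lemma cvg_lip (R : realType) (V W : zmodType) (nV : V -> R) (nW : W -> R)
  (f : V -> W) (K : R) (u : nat -> V) x :
  (forall x, 0 <= nV x) -> 0 <= K ->
  (forall x y, nW (f x - f y) <= K * nV (x - y)) ->
  seq_cvg nV u x -> seq_cvg nW (fun k => f (u k)) (f x).
Proof.
move=> pos K0 hf hu.
have K1 : 0 < K + 1 by rewrite ltr_wpDl.
apply: (small_le _ (small_scale K1 hu)) => k /=.
apply: (le_trans (hf _ _)); rewrite ler_wpM2r // lerDl //.
Qed.

Lemma cvg_ext (R : realType) (V : zmodType) (nrm : V -> R) (u v : nat -> V) x :
  (forall k, u k = v k) -> seq_cvg nrm u x -> seq_cvg nrm v x.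
Proof. by move=> h hu e e0; have [N HN] := hu e e0; exists N => k Hk; rewrite -h; apply: HN. Qed.

Section CC.
Variable R : realType.
Local Notation nc := (@ComplexField.Normc.normc R).
Lemma nc_ge0 (z : R[i]) : 0 <= nc z.
Proof. case: z => a b /=. exact: sqrtr_ge0. Qed.
Lemma nc_conj (z : R[i]) : nc (conjc z) = nc z.
Proof. case: z => a b /=. rewrite sqrrN. reflexivity. Qed.
Lemma nc_N (z : R[i]) : nc (- z) = nc z.
Proof. exact: normcN. Qed.
Lemma nc_D (z w : R[i]) : nc (z + w) <= nc z + nc w.
Proof. exact: le_normcD. Qed.
Lemma nc_M (z w : R[i]) : nc (z * w) = nc z * nc w.
Proof. exact: ComplexField.Normc.normcM. Qed.
Lemma nc_eq0 (z : R[i]) : nc z = 0 -> z = 0.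
Proof. exact: ComplexField.Normc.eq0_normc. Qed.
Lemma nc0 : nc 0 = 0.
Proof. exact: ComplexField.Normc.normc0. Qed.
Lemma nc1 : nc 1 = 1.
Proof. exact: ComplexField.Normc.normc1. Qed.
Lemma conjcD (z w : R[i]) : conjc (z + w) = conjc z + conjc w.
Proof. exact: rmorphD. Qed.
Lemma conjcM (z w : R[i]) : conjc (z * w) = conjc z * conjc w.
Proof. exact: rmorphM. Qed.
Lemma conjcKK (z : R[i]) : conjc (conjc z) = z.
Proof. exact: conjcK. Qed.
Lemma nc_Re (a b : R) : `|a| <= nc (Complex a b).
Proof.
rewrite [nc _]/=. rewrite -sqrtr_sqr. apply: ler_wsqrtr. rewrite lerDl. exact: sqr_ge0. Qed.
Lemma nc_Im (a b : R) : `|b| <= nc (Complex a b).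
Proof.
rewrite [nc _]/=. rewrite -sqrtr_sqr. apply: ler_wsqrtr. rewrite lerDr. exact: sqr_ge0. Qed.
Lemma nc_le (a b : R) : nc (Complex a b) <= `|a| + `|b|.
Proof.
rewrite [nc _]/=.
have h : 0 <= `|a| + `|b| by rewrite addr_ge0.
rewrite -(ger0_norm h) -sqrtr_sqr.
apply: ler_wsqrtr. rewrite sqrrD -[a ^+ 2]real_normK ?num_real // -[b ^+ 2]real_normK ?num_real //.
rewrite lerD2r lerDl. rewrite mulrn_wge0 // mulr_ge0 //.
Qed.

Lemma C_sub (x y : R[i]) : x - y = Complex (complex.Re x - complex.Re y) (complex.Im x - complex.Im y).
Proof. by case: x => ? ?; case: y => ? ?. Qed.

Lemma C_complete (u : nat -> R[i]) : seq_cauchy nc u -> exists z, seq_cvg nc u z.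
Proof.
move=> hc.
have hRe : seq_cauchy (fun x : R => `|x|) (fun k => complex.Re (u k)).
  move=> e e0; have [N HN] := hc e e0; exists N => k l Hk Hl.
  apply: le_lt_trans (HN k l Hk Hl); rewrite C_sub; exact: nc_Re.
have hIm : seq_cauchy (fun x : R => `|x|) (fun k => complex.Im (u k)).
  move=> e e0; have [N HN] := hc e e0; exists N => k l Hk Hl.
  apply: le_lt_trans (HN k l Hk Hl); rewrite C_sub; exact: nc_Im.
have [a ha] := RC.realcomplete hRe.
have [b hb] := RC.realcomplete hIm.
exists (Complex a b).
apply: (small_le _ (@small_add R _ _ ha hb)) => k /=.
rewrite C_sub /=; exact: nc_le.
Qed.

Lemma cvgC_comb (c : R[i]) (f g : nat -> R[i]) z1 z2 :
  seq_cvg nc f z1 -> seq_cvg nc g z2 ->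
  seq_cvg nc (fun k => c * f k + g k) (c * z1 + z2).
Proof.
move=> hf hg; apply: (cvg_add nc_D) => //.
apply: (cvg_lip (K := nc c)) hf => //; first exact: nc_ge0.
  exact: nc_ge0.
by move=> x y; rewrite -mulrBr nc_M.
Qed.

Lemma cvgC_conj (f : nat -> R[i]) z :
  seq_cvg nc f z -> seq_cvg nc (fun k => conjc (f k)) (conjc z).
Proof.
move=> hf; apply: (cvg_lip (K := 1)) hf => //; first exact: nc_ge0.
by move=> x y; rewrite mul1r -rmorphB nc_conj.
Qed.

Lemma cvgC_uniq (f : nat -> R[i]) z1 z2 :
  seq_cvg nc f z1 -> seq_cvg nc f z2 -> z1 = z2.
Proof. apply: cvg_uniq; [exact: nc_D|exact: nc_N|exact: nc_eq0|exact: nc_ge0]. Qed.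
End CC.

Section NV.
Variables (R : realType) (V : lmodType R[i]) (nrm : V -> R).
Hypothesis hn : is_norm nrm.
Local Notation nc := (@ComplexField.Normc.normc R).

Lemma nv_ge0 x : 0 <= nrm x. Proof. by case: hn. Qed.
Lemma nv_D x y : nrm (x + y) <= nrm x + nrm y. Proof. by case: hn. Qed.
Lemma nv_Z c x : nrm (c *: x) = nc c * nrm x. Proof. by case: hn. Qed.
Lemma nv_eq0 x : nrm x = 0 -> x = 0. Proof. by case: hn => _ h _ _; apply: h. Qed.
Lemma nv_N x : nrm (- x) = nrm x.
Proof. by rewrite -scaleN1r nv_Z nc_N nc1 mul1r. Qed.
Lemma nv_0 : nrm 0 = 0.
Proof. by rewrite -(scale0r (0 : V)) nv_Z nc0 mul0r. Qed.

Lemma cvgV_comb (c : R[i]) (f g : nat -> V) z1 z2 :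
  seq_cvg nrm f z1 -> seq_cvg nrm g z2 ->
  seq_cvg nrm (fun k => c *: f k + g k) (c *: z1 + z2).
Proof.
move=> hf hg; apply: (cvg_add nv_D) => //.
apply: (cvg_lip (K := nc c)) hf => //; first exact: nv_ge0.
  exact: nc_ge0.
by move=> x y; rewrite -scalerBr nv_Z.
Qed.

Lemma cvgV_uniq (f : nat -> V) z1 z2 :
  seq_cvg nrm f z1 -> seq_cvg nrm f z2 -> z1 = z2.
Proof. apply: cvg_uniq; [exact: nv_D|exact: nv_N|exact: nv_eq0|exact: nv_ge0]. Qed.
End NV.

From Stdlib Require Import Classical ClassicalEpsilon FunctionalExtensionality.

Section Main.
Variable R : realType.
Local Notation C := (R[i]).
Local Notation nc := (@ComplexField.Normc.normc R).
Variables (A0 : lmodType C) (mul : A0 -> A0 -> A0) (I : A0) (star : A0 -> A0)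
  (n0 n : A0 -> R)
  (A : lmodType C) (nA : A -> R) (j : A0 -> A)
  (mulAr : A -> A0 -> A) (mulAl : A0 -> A -> A) (starA : A -> A)
  (omega : A0 -> C)
  (H : lmodType C) (ip : H -> H -> C) (lam : A0 -> H) (pi : A0 -> H -> H).
Hypotheses (hC : is_unital_Cstar_algebra mul I star n0)
  (hJ : is_completion n nA j)
  (hO : CQ_operations mul star nA j mulAr mulAl starA)
  (hW : cont_positive_functional mul star n omega)
  (hG : is_GNS mul star omega ip lam pi).

Lemma mulA a b d : mul (mul a b) d = mul a (mul b d).
Proof. by case: hC => -[h _ _ _] _; apply: h. Qed.
Lemma mulDl c a b d : mul (c *: a + b) d = c *: mul a d + mul b d.
Proof. by case: hC => -[_ h _ _] _; apply: h. Qed.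
Lemma mulr1 a : mul a I = a.
Proof. by case: hC => -[_ _ _ h] _; case: (h a). Qed.
Lemma starM a b : star (mul a b) = mul (star b) (star a).
Proof. by case: hC => _ [[_ _ h] _]; apply: h. Qed.
Lemma starK a : star (star a) = a.
Proof. by case: hC => _ [[_ h _] _]; apply: h. Qed.

Lemma jL c a b : j (c *: a + b) = c *: j a + j b.
Proof. by case: hJ => h _ _ _ _; apply: h. Qed.
Lemma nAn : is_norm nA.
Proof. by case: hJ. Qed.
Lemma nAj a : nA (j a) = n a.
Proof. by case: hJ => _ _ h _ _; apply: h. Qed.
Lemma dens X : exists u : nat -> A0, seq_cvg nA (fun k => j (u k)) X.
Proof. by case: hJ => _ _ _ _ h; apply: h. Qed.

Lemma omL c a b : omega (c *: a + b) = c * omega a + omega b.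
Proof. by case: hW => h _ _; apply: h. Qed.

Lemma ipL c x y z : ip (c *: x + y) z = c * ip x z + ip y z.
Proof. by case: hG => -[h _ _ _ _] _ _ _ _; apply: h. Qed.
Lemma ipC x y : ip x y = conjc (ip y x).
Proof. by case: hG => -[_ h _ _ _] _ _ _ _; apply: h. Qed.
Lemma lamL c a b : lam (c *: a + b) = c *: lam a + lam b.
Proof. by case: hG => _ h _ _ _; apply: h. Qed.
Lemma ipLam a b : ip (lam a) (lam b) = omega (mul (star b) a).
Proof. by case: hG => _ _ _ h _; apply: h. Qed.
Lemma piL a c x y : pi a (c *: x + y) = c *: pi a x + pi a y.
Proof. by case: hG => _ _ _ _ h; case: (h a) => h1 _ _; apply: h1. Qed.
Lemma piLam a b : pi a (lam b) = lam (mul a b).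
Proof. by case: hG => _ _ _ _ h; case: (h a) => _ _ h1; apply: h1. Qed.

Lemma ipR c x y z : ip z (c *: x + y) = conjc c * ip z x + ip z y.
Proof. by rewrite ipC ipL conjcD conjcM -!ipC. Qed.

Lemma Adj a c d : ip (lam (mul a c)) (lam d) = ip (lam c) (lam (mul (star a) d)).
Proof. by rewrite !ipLam starM starK mulA. Qed.

Lemma inD_comb c x y : inD lam x -> inD lam y -> inD lam (c *: x + y).
Proof. by move=> [a ->] [b ->]; exists (c *: a + b); rewrite lamL. Qed.

Lemma omB a b : omega (a - b) = omega a - omega b.
Proof.
have -> : a - b = (-1) *: b + a by rewrite scaleN1r addrC.
by rewrite omL mulN1r addrC.
Qed.
Lemma jB a b : j (a - b) = j a - j b.
Proof.
have -> : a - b = (-1) *: b + a by rewrite scaleN1r addrC.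
by rewrite jL scaleN1r addrC.
Qed.

Lemma Lex X : exists z, forall w : nat -> A0,
  seq_cvg nA (fun k => j (w k)) X -> seq_cvg nc (fun k => omega (w k)) z.
Proof.
have [u0 hu0] := dens X.
case: hW => _ _ [g [g0 hg]].
have bnd : forall a b, nc (omega a - omega b) <= g * (nA (j a - X) + nA (j b - X)).
  move=> a b; rewrite -omB; apply: le_trans (hg _) _.
  rewrite ler_pM2l // -nAj jB; apply: dist_tri; [exact: nv_D nAn|exact: nv_N nAn].
have hs := small_scale g0 hu0.
have [z hz] : exists z, seq_cvg nc (fun k => omega (u0 k)) z.
  apply: C_complete => e e0.
  have [N HN] := hs _ (divr_gt0 e0 (ltr0Sn _ 1)).
  exists N => k l Hk Hl; apply: le_lt_trans (bnd _ _) _.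
  rewrite mulrDr [e](splitr e) ltrD //; [exact: HN|exact: HN].
exists z => w hw.
have hs2 := small_add (small_add (small_scale g0 hw) hs) hz.
apply: (small_le _ hs2) => k /=.
have -> : omega (w k) - z = (omega (w k) - omega (u0 k)) + (omega (u0 k) - z)
  by rewrite addrA subrK.
apply: le_trans (nc_D _ _) _; rewrite lerD2r -mulrDr; exact: bnd.
Qed.

Lemma Pdef X xi eta : exists z : C, inD lam xi -> inD lam eta ->
  forall u : nat -> A0, seq_cvg nA (fun k => j (u k)) X ->
  seq_cvg nc (fun k => ip (pi (u k) xi) eta) z.
Proof.
case: (classic (inD lam xi /\ inD lam eta)); last first.
  by move=> h; exists 0 => h1 h2; exfalso; apply: h.
move=> [[a ->] [b ->]].
have [z hz] := Lex (mulAl (star b) (mulAr X a)).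
exists z => _ _ u hu.
have [h1 _ _] := hO hu.
have [_ h2 _] := hO (h1 a).
apply: cvg_ext (hz _ (h2 (star b))) => k.
by rewrite piLam ipLam.
Qed.

Definition pibar X xi eta := proj1_sig (constructive_indefinite_description _ (Pdef X xi eta)).

Lemma PS X xi eta u : inD lam xi -> inD lam eta ->
  seq_cvg nA (fun k => j (u k)) X ->
  seq_cvg nc (fun k => ip (pi (u k) xi) eta) (pibar X xi eta).
Proof.
move=> h1 h2 hu; rewrite /pibar.
case: (constructive_indefinite_description _ _) => z hz /=; exact: hz.
Qed.

Lemma Peq X xi eta u w : inD lam xi -> inD lam eta ->
  seq_cvg nA (fun k => j (u k)) X ->
  seq_cvg nc (fun k => ip (pi (u k) xi) eta) w -> pibar X xi eta = w.
Proof. move=> h1 h2 hu hw; exact: cvgC_uniq (PS h1 h2 hu) hw. Qed.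

Lemma P_j a xi eta : inD lam xi -> inD lam eta -> pibar (j a) xi eta = ip (pi a xi) eta.
Proof.
move=> h1 h2; apply: (Peq (u := fun _ => a) h1 h2 _).
  apply: cvg_const; exact: nv_0 nAn.
apply: cvg_const; exact: nc0.
Qed.

Lemma P_lin c X Y xi eta : inD lam xi -> inD lam eta ->
  pibar (c *: X + Y) xi eta = c * pibar X xi eta + pibar Y xi eta.
Proof.
move=> h1 h2; have [u hu] := dens X; have [v hv] := dens Y.
apply: (Peq (u := fun k => c *: u k + v k) h1 h2 _).
  apply: cvg_ext (cvgV_comb nAn c hu hv) => k; by rewrite jL.
apply: cvg_ext (cvgC_comb c (PS h1 h2 hu) (PS h1 h2 hv)) => k.
case: h1 => a ->; by rewrite !piLam mulDl lamL ipL.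
Qed.

Lemma P_vD X xi : inD lam xi -> in_vD lam (pibar X xi).
Proof.
move=> h1 c x y hx hy; have [u hu] := dens X.
apply: (Peq (u := u) h1 (inD_comb c hx hy) hu).
apply: cvg_ext (cvgC_comb (conjc c) (PS h1 hx hu) (PS h1 hy hu)) => k.
by rewrite ipR.
Qed.

Lemma P_LD X : in_LDvD lam (pibar X).
Proof.
split; first by move=> xi h; exact: P_vD.
move=> c xi eta zeta h1 h2 h3; have [u hu] := dens X.
apply: (Peq (u := u) (inD_comb c h1 h2) h3 hu).
apply: cvg_ext (cvgC_comb c (PS h1 h3 hu) (PS h2 h3 hu)) => k.
by rewrite piL ipL.
Qed.

Lemma P_l a X xi eta : inD lam xi -> inD lam eta ->
  pibar (mulAl a X) xi eta = pibar X xi (pi (star a) eta).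
Proof.
move=> h1 h2; have [u hu] := dens X.
have h3 : inD lam (pi (star a) eta) by case: h2 => b ->; rewrite piLam; eexists.
have [_ hl _] := hO hu.
apply: (Peq (u := fun k => mul a (u k)) h1 h2 (hl a)).
apply: cvg_ext (PS h1 h3 hu) => k.
case: h1 => c ->; case: h2 => d ->.
by rewrite !piLam mulA [RHS]Adj.
Qed.

Lemma P_r a X xi eta : inD lam xi -> inD lam eta ->
  pibar (mulAr X a) xi eta = pibar X (pi a xi) eta.
Proof.
move=> h1 h2; have [u hu] := dens X.
have h3 : inD lam (pi a xi) by case: h1 => b ->; rewrite piLam; eexists.
have [hr _ _] := hO hu.
apply: (Peq (u := fun k => mul (u k) a) h1 h2 (hr a)).
apply: cvg_ext (PS h3 h2 hu) => k.
case: h1 => c ->.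
by rewrite !piLam mulA.
Qed.

Lemma P_s X xi eta : inD lam xi -> inD lam eta ->
  pibar (starA X) xi eta = conjc (pibar X eta xi).
Proof.
move=> h1 h2; have [u hu] := dens X.
have [_ _ hs] := hO hu.
apply: (Peq (u := fun k => star (u k)) h1 h2 hs).
apply: cvg_ext (cvgC_conj (PS h2 h1 hu)) => k.
case: h1 => c ->; case: h2 => d ->.
by rewrite !piLam -ipC Adj starK.
Qed.

Lemma main : exists (pibar : A -> H -> H -> C) (lambar : A -> H -> C),
    is_star_rep j mulAr mulAl starA ip lam pibar /\
    (forall a xi eta, inD lam xi -> inD lam eta ->
       pibar (j a) xi eta = ip (pi a xi) eta) /\
    (forall X, in_vD lam (lambar X)) /\
    (forall (c : C) X Y eta, inD lam eta ->
       lambar (c *: X + Y) eta = c * lambar X eta + lambar Y eta) /\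
    (forall a eta, inD lam eta -> lambar (j a) eta = ip (lam a) eta) /\
    (forall X B eta, inD lam eta ->
       lambar (mulAr X B) eta = pibar X (lam B) eta).
Proof.
have hI : inD lam (lam I) by eexists.
exists pibar, (fun X => pibar X (lam I)).
split; last split; last split; last split; last split.
- split.
  + exact: P_LD.
  + move=> c X Y xi eta h1 h2; exact: P_lin.
  + move=> a; exists (pi a), (pi (star a)); split.
    * split.
      - by move=> x [b ->]; rewrite piLam; eexists.
      - by move=> x [b ->]; rewrite piLam; eexists.
      - by move=> c x y _ _; rewrite piL.
      - by move=> x y [c ->] [d ->]; rewrite !piLam Adj.
    * by move=> xi eta h1 h2; exact: P_j.
    * by move=> X xi eta h1 h2; exact: P_l.
    * by move=> X xi eta h1 h2; exact: P_r.
  + by move=> X xi eta h1 h2; exact: P_s.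
- by move=> a xi eta h1 h2; exact: P_j.
- by move=> X; exact: P_vD.
- by move=> c X Y eta h; exact: P_lin.
- by move=> a eta h; rewrite P_j // piLam mulr1.
- by move=> X B eta h; rewrite P_r // piLam mulr1.
Qed.
End Main.

Theorem proposition3p2 (R : realType)
  (A0 : lmodType R[i]) (mul : A0 -> A0 -> A0) (I : A0) (star : A0 -> A0)
  (n0 n : A0 -> R)
  (A : lmodType R[i]) (nA : A -> R) (j : A0 -> A)
  (mulAr : A -> A0 -> A) (mulAl : A0 -> A -> A) (starA : A -> A)
  (omega : A0 -> R[i])
  (H : lmodType R[i]) (ip : H -> H -> R[i]) (lam : A0 -> H) (pi : A0 -> H -> H) :
  is_unital_Cstar_algebra mul I star n0 ->
  is_CQ_norm mul star n0 n ->
  is_completion n nA j ->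
  CQ_operations mul star nA j mulAr mulAl starA ->
  cont_positive_functional mul star n omega ->
  is_GNS mul star omega ip lam pi ->
  exists (pibar : A -> H -> H -> R[i]) (lambar : A -> H -> R[i]),
    (* (1) *)
    is_star_rep j mulAr mulAl starA ip lam pibar /\
    (forall a xi eta, inD lam xi -> inD lam eta ->
       pibar (j a) xi eta = ip (pi a xi) eta) /\
    (* (2) *)
    (forall X, in_vD lam (lambar X)) /\
    (forall (c : R[i]) X Y eta, inD lam eta ->
       lambar (c *: X + Y) eta = c * lambar X eta + lambar Y eta) /\
    (forall a eta, inD lam eta -> lambar (j a) eta = ip (lam a) eta) /\
    (forall X B eta, inD lam eta ->
       lambar (mulAr X B) eta = pibar X (lam B) eta).
Proof.
move=> hC _ hJ hO hW hG.
exact: (main hC hJ hO hW hG).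
Qed.
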